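(* For every integer $g\geq 3$ there exists a fragile graph that is cubic ($3$-regular) and has girth $g$; in particular, for every $g$ there is a fragile graph of girth $g$ that is not $2$-degenerate.
   Context: All graphs are finite and simple. A graph is $k$-connected if it has at least $k+1$ vertices and no vertex cutset with at most $k-1$ vertices. A graph is fragile if it has no $3$-connected subgraph. A graph is $2$-degenerate if every non-null subgraph has a vertex of degree at most $2$. *)

(* Defs.v *)
From mathcomp Require Import all_boot.
Set Implicit Arguments. Unset Strict Implicit. Unset Printing Implicit Defensive.

Section Graphs.
Variable V : finType.

Definition simple_graph (e : rel V) : Prop := symmetric e /\ irreflexive e.

Definition is_subgraph (e : rel V) (S : {set V}) (f : rel V) : Prop :=
  symmetric f /\ forall x y, f x y -> [&& x \in S, y \in S & e x y].

Definition restr (A : {set V}) (f : rel V) : rel V :=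
  [rel a b | [&& a \in A, b \in A & f a b]].

Definition connected_on (A : {set V}) (f : rel V) : Prop :=
  forall x y, x \in A -> y \in A -> connect (restr A f) x y.

Definition k_connected (k : nat) (S : {set V}) (f : rel V) : Prop :=
  k.+1 <= #|S| /\
  forall X : {set V}, X \subset S -> #|X| <= k.-1 -> connected_on (S :\: X) f.

Definition fragile (e : rel V) : Prop :=
  forall (S : {set V}) (f : rel V), is_subgraph e S f -> ~ k_connected 3 S f.

Definition deg_in (S : {set V}) (f : rel V) (x : V) : nat :=
  #|[set y in S | f x y]|.

Definition two_degenerate (e : rel V) : Prop :=
  forall (S : {set V}) (f : rel V), is_subgraph e S f -> S != set0 ->
    exists2 x, x \in S & deg_in S f x <= 2.

Definition cubic (e : rel V) : Prop := forall x : V, #|[set y | e x y]| = 3.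

Definition has_cycle_of_length (e : rel V) (n : nat) : Prop :=
  exists s : seq V, [/\ size s = n, 3 <= n, uniq s & cycle e s].

Definition girth_eq (e : rel V) (g : nat) : Prop :=
  has_cycle_of_length e g /\ forall n, n < g -> ~ has_cycle_of_length e n.

End Graphs.

(* Main.v *)
Require Import Defs.
From mathcomp Require Import all_boot.
From mathcomp Require Import zify.
From Stdlib Require Import Classical.
Set Implicit Arguments. Unset Strict Implicit. Unset Printing Implicit Defensive.

Section Walks.
Variable T : eqType.
Implicit Types (e : rel T) (x y u v a b : T) (p : seq T).

Definition far e a b k := forall p, path e a p -> last a p = b -> k <= size p.
Definition NS e g := forall u p, path e u p -> uniq (u :: p) -> 2 <= size p ->
  e u (last u p) -> g <= (size p).+1.
Definition Ne x y : rel T := fun a b => ((a == x) && (b == y)) || ((a == y) && (b == x)).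
Definition add e x y : rel T := fun a b => e a b || Ne x y a b.
Definition rem e x y : rel T := fun a b => e a b && ~~ Ne x y a b.

Lemma split_last e (N : rel T) u p :
  path (fun a b => e a b || N a b) u p -> ~~ path e u p ->
  exists p1 b p2, [/\ p = p1 ++ b :: p2, N (last u p1) b & path e b p2].
Proof.
elim: p u => [//|c p IH] u /= /andP[Huc Hp].
case Hc: (path e c p).
  rewrite andbT => Hn. exists [::], c, p; split => //.
  by move: Huc; rewrite (negbTE Hn).
rewrite andbF => _. have [p1 [b [p2 [-> HN Hp2]]]] := IH c Hp (negbT Hc).
by exists (c :: p1), b, p2.
Qed.

Lemma NS_sub e1 e2 g : subrel e2 e1 -> NS e1 g -> NS e2 g.
Proof.
move=> S H u p Hp Hu Hs He; apply: H Hu Hs _; [exact: sub_path Hp | exact: S _ _ He].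
Qed.

Lemma far_sub e1 e2 a b k : subrel e2 e1 -> far e1 a b k -> far e2 a b k.
Proof. by move=> S H p Hp Hl; apply: H => //; exact: sub_path Hp. Qed.

Lemma walk_rev e a p : symmetric e -> path e a p ->
  exists q, [/\ path e (last a p) q, last (last a p) q = a & size q = size p].
Proof.
move=> Hs; elim/last_ind: p => [|p c IH]; first by exists [::].
rewrite rcons_path last_rcons => /andP[Hp Hc].
have [q [Hq Hl Hz]] := IH Hp.
exists (last a p :: q); rewrite /= Hq Hl Hz size_rcons; split=> //.
by rewrite Hs Hc.
Qed.

Lemma far_rev e a b k : symmetric e -> far e a b k -> far e b a k.
Proof.
move=> Hs H p Hp Hl; have [q [Hq Hq2 Hz]] := walk_rev Hs Hp.
rewrite Hl in Hq Hq2; rewrite -Hz; exact: H.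
Qed.

Lemma last_uniq_nil u p : uniq (u :: p) -> last u p = u -> p = [::].
Proof.
case: p => [//|c p] /= /andP[Hu _] Hl; move: (mem_last c p); rewrite Hl => Hm.
by rewrite Hm in Hu.
Qed.
End Walks.

Section Walks2.
Variable T : eqType.
Implicit Types (e : rel T) (x y u v a b : T) (p : seq T).

Lemma Ne_mem x y a b c d : Ne x y a b -> Ne x y c d -> (b == c) || (b == d).
Proof.
by move=> /orP[/andP[/eqP ? /eqP ?]|/andP[/eqP ? /eqP ?]]
   /orP[/andP[/eqP ? /eqP ?]|/andP[/eqP ? /eqP ?]]; subst; rewrite ?eqxx ?orbT.
Qed.

Lemma Ne_eq x y a b c d : Ne x y a b -> Ne x y c d -> b = d -> a = c.
Proof.
by move=> /orP[/andP[/eqP ? /eqP ?]|/andP[/eqP ? /eqP ?]]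
   /orP[/andP[/eqP ? /eqP ?]|/andP[/eqP ? /eqP ?]] ?; subst.
Qed.

Lemma Ne_sym x y a b : Ne x y a b = Ne x y b a.
Proof. by rewrite /Ne [X in X || _]andbC [X in _ || X]andbC orbC. Qed.

Lemma far_Ne e x y a b k : far e x y k -> far e y x k -> Ne x y a b -> far e a b k.
Proof. by move=> H1 H2 /orP[/andP[/eqP ? /eqP ?]|/andP[/eqP ? /eqP ?]]; subst. Qed.

Lemma add_sym e x y : symmetric e -> symmetric (add e x y).
Proof. by move=> Hs a b; rewrite /add Hs Ne_sym. Qed.

Lemma rem_sym e x y : symmetric e -> symmetric (rem e x y).
Proof. by move=> Hs a b; rewrite /rem Hs Ne_sym. Qed.

Lemma NS_add e x y g : symmetric e -> NS e g -> far e x y g.-1 -> far e y x g.-1 ->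
  NS (add e x y) g.
Proof.
move=> Hs H Fxy Fyx u p Hp Hu Hsz Hcl.
rewrite leqNgt; apply/negP => Hlt.
case Hpe: (path e u p).
  case/orP: Hcl => Hcl; first by move: (H u p Hpe Hu Hsz Hcl); rewrite leqNgt Hlt.
  have := far_Ne Fxy Fyx Hcl Hpe (erefl _); lia.
have [p1 [b [p2 [Ep HN Hp2]]]] := split_last Hp (negbT Hpe).
move: (Hu); rewrite Ep -cat_cons cat_uniq => /and3P[Hu1 Hhas Hu2].
have Hb : b \notin u :: p1 by apply: contra Hhas => Hb; apply/hasP; exists b => //; rewrite inE eqxx.
have Hp1 : path e u p1.
  move: Hp; rewrite Ep cat_path => /andP[Hp1 _].
  apply: (sub_in_path (P := mem (u :: p1))) Hp1; last by apply/allP.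
  move=> c d Hc Hd /orP[//|HN2]; case/orP: (Ne_mem HN HN2) => /eqP Eb.
    by rewrite Eb Hc in Hb.
  by rewrite Eb Hd in Hb.
have Hlast : last u p = last b p2 by rewrite Ep last_cat.
case/orP: Hcl => Hcl.
  have Hw : path e b (p2 ++ u :: p1).
    by rewrite cat_path Hp2 /= Hp1 andbT Hs -Hlast.
  rewrite Ne_sym in HN; have := far_Ne Fxy Fyx HN.
  move=> F; have := F (p2 ++ u :: p1) Hw; rewrite last_cat /= => /(_ erefl).
  move: Hlt; rewrite Ep !size_cat /=; lia.
have Ebv : b = last u p.
  case/orP: (Ne_mem HN Hcl) => /eqP // Ebu.
  by rewrite Ebu inE eqxx in Hb.
have Eau := Ne_eq HN Hcl Ebv.
have E1 : p1 = [::] := last_uniq_nil Hu1 Eau.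
have E2 : p2 = [::] by apply: (last_uniq_nil Hu2); rewrite -Hlast.
by move: Hsz; rewrite Ep E1 E2.
Qed.
End Walks2.

Section Walks3.
Variable T : eqType.
Implicit Types (e : rel T) (x y u v a b : T) (p : seq T).

Lemma rem_sub e x y : subrel (rem e x y) e.
Proof. by move=> a b /andP[]. Qed.

Lemma add_sub e x y : subrel e (add e x y).
Proof. by move=> a b H; rewrite /add H. Qed.

Lemma far_rem e u v g : irreflexive e -> NS e g -> e u v -> far (rem e u v) u v g.-1.
Proof.
move=> Hi H Huv p Hp; case/shortenP: Hp => p' Hp' Hu' Hsub Hl'.
have Hsz : size p' <= size p.
  by apply: uniq_leq_size => //; move: Hu'; rewrite cons_uniq => /andP[].
have He : path e u p' := sub_path (@rem_sub e u v) Hp'.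
case: p' Hp' Hu' Hsub Hl' Hsz He => [|w [|w2 q]] Hp' Hu' Hsub Hl' Hsz He.
- by move: Huv; rewrite /= in Hl'; rewrite -Hl' Hi.
- by move: Hp'; rewrite /= in Hl'; rewrite -Hl' /= /rem /Ne !eqxx /= andbF.
- have := H u (w :: w2 :: q) He Hu' erefl; rewrite Hl' => /(_ Huv).
  move: Hsz; rewrite /=; lia.
Qed.

Lemma far_step e x u v y g : far e x v g.-1 -> far e y v g.-1 -> far (rem e u v) u v g.-1 ->
  far (add (rem e u v) x u) y v g.-1.
Proof.
move=> Fxv Fyv Fuv p Hp Hl.
case Hr: (path (rem e u v) y p).
  exact: Fyv (sub_path (@rem_sub e u v) Hr) Hl.
have [p1 [b [p2 [Ep HN Hp2]]]] := split_last Hp (negbT Hr).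
have Hl2 : last b p2 = v by rewrite -Hl Ep last_cat.
have Hsz : size p2 <= size p by rewrite Ep size_cat /=; lia.
case/orP: HN => /andP[_ /eqP Eb]; subst b.
  by have := Fuv p2 Hp2 Hl2; lia.
by have := Fxv p2 (sub_path (@rem_sub e u v) Hp2) Hl2; lia.
Qed.

Lemma NS_swap e g x y u v : symmetric e -> irreflexive e -> NS e g -> e u v ->
  far e x u g.-1 -> far e y v g.-1 -> far e x v g.-1 ->
  NS (add (add (rem e u v) x u) y v) g.
Proof.
move=> Hs Hi H Huv Fxu Fyv Fxv.
have Hs0 := rem_sym u v Hs.
have H0 : NS (rem e u v) g := NS_sub (@rem_sub e u v) H.
have Fxu0 : far (rem e u v) x u g.-1 := far_sub (@rem_sub e u v) Fxu.
have H1 := NS_add Hs0 H0 Fxu0 (far_rev Hs0 Fxu0).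
have Fyv1 := far_step Fxv Fyv (far_rem Hi H Huv).
exact: NS_add (add_sym x u Hs0) H1 Fyv1 (far_rev (add_sym x u Hs0) Fyv1).
Qed.
End Walks3.

Section Walks4.
Variable T : eqType.
Implicit Types (e : rel T) (x y u v a b : T) (p : seq T).

Lemma far_pot e (phi : T -> nat) a b :
  (forall c d, e c d -> phi d <= (phi c).+1) -> far e a b (phi b - phi a).
Proof.
move=> Hphi p; elim: p a => [|c p IH] a /=; first by move=> _ <-; rewrite subnn.
move=> /andP[Hac Hp] Hl; have := IH c Hp Hl; have := Hphi _ _ Hac; lia.
Qed.

Lemma far_iso e a b k : a != b -> (forall c, ~~ e c b) -> far e a b k.
Proof.
move=> Hab Hb; elim/last_ind => [|p c _] /=; first by move=> _ Eab; rewrite Eab eqxx in Hab.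
rewrite rcons_path last_rcons => /andP[_ Hc] Ec; subst c.
by rewrite (negbTE (Hb _)) in Hc.
Qed.

Lemma far_ext e x u v k : e v u -> far e x u k.+1 -> far e x v k.
Proof.
move=> Hvu F p Hp Hl; have := F (rcons p u); rewrite rcons_path Hp Hl Hvu last_rcons size_rcons.
by move=> /(_ erefl erefl).
Qed.

Lemma far_mono e a b k1 k2 : k1 <= k2 -> far e a b k2 -> far e a b k1.
Proof. by move=> Hk F p Hp Hl; apply: leq_trans Hk (F p Hp Hl). Qed.

Lemma far_edge e a b k : 1 < k -> far e a b k -> ~~ e a b.
Proof. by move=> Hk F; apply/negP => Hab; have := F [:: b]; rewrite /= Hab => /(_ erefl erefl); lia. Qed.

Lemma far_neq e a b k : 0 < k -> far e a b k -> a != b.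
Proof. by move=> Hk F; apply/negP => /eqP Hab; have := F [::] erefl Hab; rewrite /=; lia. Qed.

Lemma add_mono e1 e2 x y : subrel e1 e2 -> subrel (add e1 x y) (add e2 x y).
Proof. by move=> S a b; rewrite /add => /orP[/S ->|->]; rewrite ?orbT. Qed.

Definition mpair (s : T -> T) a b := fun w => if w == a then b else if w == b then a else s w.
Definition unpair (s : T -> T) u v := fun w => if w == u then u else if w == v then v else s w.

Lemma pair_inv s a b : involutive s -> s a = a -> s b = b -> involutive (mpair s a b).
Proof.
move=> Hs Ha Hb w; rewrite /mpair.
case: (eqVneq w a) => [->|Hwa]; first by rewrite eqxx; case: eqVneq.
case: (eqVneq w b) => [->|Hwb]; first by rewrite eqxx.
have H1 : s w != a by apply: contra Hwa => /eqP Hw; rewrite -(Hs w) Hw Ha.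
have H2 : s w != b by apply: contra Hwb => /eqP Hw; rewrite -(Hs w) Hw Hb.
by rewrite (negbTE H1) (negbTE H2) Hs.
Qed.

Lemma unpair_inv s u v : involutive s -> s u = v -> involutive (unpair s u v).
Proof.
move=> Hs Hu w; rewrite /unpair.
case: (eqVneq w u) => [->|Hwu]; first by rewrite eqxx.
case: (eqVneq w v) => [->|Hwv]; first by rewrite eqxx; case: eqVneq.
have H1 : s w != u by apply: contra Hwv => /eqP Hw; rewrite -(Hs w) Hw Hu.
have H2 : s w != v by apply: contra Hwu => /eqP Hw; rewrite -(Hs w) Hw -Hu Hs.
by rewrite (negbTE H1) (negbTE H2) Hs.
Qed.
End Walks4.

Lemma even_invol (T : finType) (A : {set T}) (s : T -> T) :
  (forall a, a \in A -> s a \in A) -> (forall a, a \in A -> s (s a) = a) ->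
  (forall a, a \in A -> s a != a) -> ~~ odd #|A|.
Proof.
move: {2}#|A| (leqnn #|A|) => k; elim: k A => [|k IH] A Hk Hc Hi Hf.
  by move: Hk; rewrite leqn0 => /eqP ->.
case: (set_0Vmem A) => [->|[a Ha]]; first by rewrite cards0.
set A' := A :\ a :\ s a.
have Hsa : s a \in A :\ a by rewrite !inE Hc // Hf.
have HA : #|A| = #|A'|.+2.
  by rewrite /A' (cardsD1 a A) Ha (cardsD1 (s a) (A :\ a)) Hsa.
have Hin w : w \in A' -> (w \in A) && (w != a) && (w != s a).
  by rewrite !inE => /and3P[-> -> ->].
rewrite HA /= negbK; apply: (IH A').
- by move: Hk; rewrite HA; lia.
- move=> w /Hin /andP[/andP[Hw Hwa] Hwsa]; rewrite !inE Hc // andbT.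
  apply/andP; split.
    by apply: contra Hwa => /eqP Hh; move: (f_equal s Hh); rewrite !Hi // => ->.
  by apply: contra Hwsa => /eqP Hh; rewrite -Hh Hi.
- by move=> w /Hin /andP[/andP[Hw _] _]; apply: Hi.
- by move=> w /Hin /andP[/andP[Hw _] _]; apply: Hf.
Qed.
Set Implicit Arguments. Unset Strict Implicit. Unset Printing Implicit Defensive.

Section Graph.
Variables m g : nat.
Hypotheses (Hg : 2 < g) (Hgm : g < m) (Hmeven : ~~ odd m) (Hm4 : 2 * 4 ^ g.-1 + 2 < m).
Local Notation n := (m + m).

Definition cyc : rel 'I_n := fun a b => (b == ordS a) || (a == ordS b).

Lemma modS (a : 'I_n) : a.+1 %% n = if a.+1 == n then 0 else a.+1.
Proof.
case: eqP => [->|H]; first by rewrite modnn.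
by apply: modn_small; have := ltn_ord a; lia.
Qed.

Lemma ordSE (a : 'I_n) : nat_of_ord (ordS a) = if a.+1 == n then 0 else a.+1.
Proof. exact: modS. Qed.

Lemma eqS (a b : 'I_n) : (b == ordS a) = ((b : nat) == if a.+1 == n then 0 else a.+1).
Proof. by rewrite -ordSE. Qed.

Lemma ordS_neq (a : 'I_n) : ordS a != a.
Proof.
apply/eqP => /(congr1 val) /=; have := ordSE a; have := ltn_ord a.
case: ifP => /eqP ? ? ? ?; lia.
Qed.

Lemma ordSS_neq (a : 'I_n) : ordS (ordS a) != a.
Proof.
apply/eqP => /(congr1 (@nat_of_ord _)); have := ordSE (ordS a); have := ordSE a; have := ltn_ord a.
case: ifP => /eqP ? ? ; case: ifP => /eqP ? ? ? ?; lia.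
Qed.

Lemma ordS_pred_neq (a : 'I_n) : ordS a != ord_pred a.
Proof.
apply/eqP => H; have := ordSS_neq a; by rewrite H ord_predK eqxx.
Qed.

Lemma cyc_sym : symmetric cyc.
Proof. by move=> a b; rewrite /cyc orbC. Qed.

Lemma cyc_irr : irreflexive cyc.
Proof. by move=> a; rewrite /cyc eq_sym (negbTE (ordS_neq a)). Qed.

Lemma cyc_nb (a b : 'I_n) : cyc a b -> (b == ordS a) || (b == ord_pred a).
Proof. by case/orP => [->//|/eqP ->]; rewrite ordSK eqxx orbT. Qed.

Lemma n0 : 0 < n. Proof. lia. Qed.
Lemma ng : g.-1 < n. Proof. lia. Qed.
Lemma nl : n.-1 < n. Proof. lia. Qed.
Definition o0 : 'I_n := Ordinal n0.
Definition og : 'I_n := Ordinal ng.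
Definition ol : 'I_n := Ordinal nl.

Definition P : rel 'I_n := fun a b => ((b : nat) == (a : nat).+1) || ((a : nat) == (b : nat).+1).
Definition Pk k : rel 'I_n := fun a b => P a b && (maxn a b <= k).

Lemma Pk_sym k : symmetric (Pk k).
Proof. by move=> a b; rewrite /Pk /P orbC maxnC. Qed.

Lemma NS_Pk k : NS (Pk k) g.
Proof.
elim: k => [|k IH].
  move=> u p _ _ _; rewrite /Pk /P; move: (last u p) => w /andP[/orP[/eqP|/eqP] ?]; lia.
case Hk: (k.+1 < n); last first.
  apply: NS_sub IH => a b; rewrite /Pk => /andP[-> _] /=.
  have := ltn_ord a; have := ltn_ord b; lia.
have Hk' : k < n by lia.
pose a0 : 'I_n := Ordinal Hk'. pose b0 : 'I_n := Ordinal Hk.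
have S : subrel (Pk k.+1) (add (Pk k) a0 b0).
  move=> a b; rewrite /add /Pk /P /Ne => /andP[H1 H2].
  case: (leqP (maxn a b) k) => H3; first by rewrite H1.
  apply/orP; right; rewrite -!val_eqE /=.
  move: H1 H2 H3; lia.
apply: NS_sub S _; have F : far (Pk k) a0 b0 g.-1.
  apply: far_iso; first by rewrite -val_eqE /=; lia.
  move=> c; rewrite /Pk /P /=; lia.
exact: NS_add (@Pk_sym k) IH F (far_rev (@Pk_sym k) F).
Qed.

Lemma NS_P : NS P g.
Proof.
have S : subrel P (Pk n).
  move=> a b H; rewrite /Pk H /=; have := ltn_ord a; have := ltn_ord b; lia.
exact: NS_sub S (@NS_Pk n).
Qed.

Lemma P_sym : symmetric P.
Proof. by move=> a b; rewrite /P orbC. Qed.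

Lemma NS_cyc : NS cyc g.
Proof.
have S : subrel cyc (add P ol o0).
  move=> a b; rewrite /cyc /add /P /Ne !eqS -!val_eqE /=.
  have := ltn_ord a; have := ltn_ord b.
  case: ifP => /eqP ?; case: ifP => /eqP ?; lia.
apply: NS_sub S _; apply: NS_add P_sym NS_P _ _.
  have H : forall c d, P c d -> (fun v : 'I_n => n.-1 - v) d <= ((fun v : 'I_n => n.-1 - v) c).+1.
    by move=> c d; rewrite /P /=; lia.
  apply: far_mono (far_pot (a := ol) (b := o0) H); rewrite /=; lia.
have H : forall c d, P c d -> (fun v : 'I_n => nat_of_ord v) d <= ((fun v : 'I_n => nat_of_ord v) c).+1.
  by move=> c d; rewrite /P /=; lia.
apply: far_mono (far_pot (a := o0) (b := ol) H); rewrite /=; lia.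
Qed.

Lemma far_cyc : far cyc o0 og g.-1.
Proof.
have H : forall c d, cyc c d -> (fun v : 'I_n => minn v (n - v)) d <= ((fun v : 'I_n => minn v (n - v)) c).+1.
  move=> c d; rewrite /cyc !eqS /=.
  have := ltn_ord c; have := ltn_ord d.
  case: ifP => /eqP ?; case: ifP => /eqP ?; lia.
apply: far_mono (far_pot (a := o0) (b := og) H); rewrite /=; lia.
Qed.

Definition M (s : 'I_n -> 'I_n) : rel 'I_n := fun a b => (s a == b) && (a != b).
Definition E s : rel 'I_n := fun a b => cyc a b || M s a b.
Definition half (a b : 'I_n) := (a < m) == (b < m).

Definition Inv (s : 'I_n -> 'I_n) :=
  [/\ involutive s, forall x, s x != x -> ~~ cyc x (s x),
      forall x, half x (s x), s o0 = og & NS (E s) g].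

Lemma E_sym s : involutive s -> symmetric (E s).
Proof.
move=> Hs a b; rewrite /E cyc_sym /M; congr (_ || _).
by apply/idP/idP => /andP[/eqP <- H]; rewrite Hs eqxx eq_sym.
Qed.

Lemma E_irr s : irreflexive (E s).
Proof. by move=> a; rewrite /E cyc_irr /M eqxx andbF. Qed.

Lemma cyc_E s : subrel cyc (E s).
Proof. by move=> a b H; rewrite /E H. Qed.

Lemma half_sym a b : half a b = half b a.
Proof. by rewrite /half eq_sym. Qed.

Lemma half_trans a b c : half a b -> half b c -> half a c.
Proof. by rewrite /half => /eqP -> /eqP ->. Qed.

Lemma o0_neq_og : o0 != og.
Proof. by rewrite -val_eqE /=; lia. Qed.

Lemma not_cyc_o0og : ~~ cyc o0 og.
Proof.
rewrite /cyc !eqS /=; case: ifP => /eqP ?; case: ifP => /eqP ?; lia.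
Qed.

Lemma E_mpair s a b : subrel (E (mpair s a b)) (add (E s) a b).
Proof.
move=> c d; rewrite /E /add /M /mpair /Ne.
case: (cyc c d) => //=.
case: (eqVneq c a) => [->|Hca] /=; first by move=> /andP[/eqP -> _]; rewrite !eqxx orbT.
case: (eqVneq c b) => [->|Hcb] /=; first by move=> /andP[/eqP -> _]; rewrite !eqxx !orbT.
by move=> ->.
Qed.

Lemma E_unpair s u v : involutive s -> s u = v -> ~~ cyc u v ->
  subrel (E (unpair s u v)) (rem (E s) u v).
Proof.
move=> Hs Hu Hc c d; rewrite /E /rem /M /unpair /Ne.
case Hcd: (cyc c d) => /=.
  move=> _; apply/negP => /orP[] /andP[/eqP Ec /eqP Ed]; subst c d.
    by rewrite Hcd in Hc.
  by rewrite cyc_sym Hcd in Hc.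
case: (eqVneq c u) => [->|Hcu] /=; first by move=> /andP[/eqP ->]; rewrite eqxx.
case: (eqVneq c v) => [->|Hcv] /=; first by move=> /andP[/eqP ->]; rewrite eqxx.
by move=> /andP[/eqP Ed Hcd2]; subst d; rewrite eqxx Hcd2 /=.
Qed.

Definition s0 : 'I_n -> 'I_n := mpair id o0 og.

Lemma Inv_s0 : Inv s0.
Proof.
have Hn := o0_neq_og.
split.
- exact: pair_inv.
- move=> x; rewrite /s0 /mpair.
  case: (eqVneq x o0) => [->|Hx0] /=; first by move=> _; exact: not_cyc_o0og.
  case: (eqVneq x og) => [->|Hxg] /=; last by rewrite eqxx.
  by rewrite cyc_sym not_cyc_o0og.
- move=> x; rewrite /s0 /mpair.
  case: (eqVneq x o0) => [->|Hx0]; first by rewrite /half /=; apply/eqP; lia.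
  case: (eqVneq x og) => [->|Hxg]; first by rewrite /half /=; apply/eqP; lia.
  by rewrite /half eqxx.
- by rewrite /s0 /mpair eqxx.
- apply: NS_sub (@E_mpair id o0 og) _.
  have S : subrel (E id) cyc by move=> a b; rewrite /E /M => /orP[//|/andP[/eqP -> ]]; rewrite eqxx.
  apply: NS_add (E_sym (s := id) (fun x => erefl)) (NS_sub S NS_cyc) _ _.
    exact: far_sub S far_cyc.
  exact: far_sub S (far_rev cyc_sym far_cyc).
Qed.

Definition grow (s : 'I_n -> 'I_n) (X : {set 'I_n}) : {set 'I_n} :=
  X :|: [set ordS w | w in X] :|: [set ord_pred w | w in X] :|: [set s w | w in X].
Definition B s x k := iter k (grow s) [set x].

Lemma card_U (A C : {set 'I_n}) : #|A :|: C| <= #|A| + #|C|.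
Proof. exact: (leq_card_setU A C).1. Qed.

Lemma B_card s x k : #|B s x k| <= 4 ^ k.
Proof.
elim: k => [|k IH]; first by rewrite /B /= cards1.
rewrite /B iterS -/(B s x k) /grow expnS.
set X := B s x k.
have h1 := card_U (X :|: [set ordS w | w in X] :|: [set ord_pred w | w in X]) [set s w | w in X].
have h2 := card_U (X :|: [set ordS w | w in X]) [set ord_pred w | w in X].
have h3 := card_U X [set ordS w | w in X].
have i1 : #|[set ordS w | w in X]| <= #|X| := leq_imset_card _ _.
have i2 : #|[set ord_pred w | w in X]| <= #|X| := leq_imset_card _ _.
have i3 : #|[set s w | w in X]| <= #|X| := leq_imset_card _ _.
have IH' : #|X| <= 4 ^ k := IH.
clearbody X; move: IH' h1 h2 h3 i1 i2 i3; move: (4 ^ k) => t.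
move: #|X| => a. move: #|[set ordS w | w in X]| => b1. move: #|[set ord_pred w | w in X]| => b2. move: #|[set s w | w in X]| => b3.
move: #|X :|: [set ordS w | w in X] :|: [set ord_pred w | w in X] :|: [set s w | w in X]| => c3.
move: #|X :|: [set ordS w | w in X] :|: [set ord_pred w | w in X]| => c2.
move: #|X :|: [set ordS w | w in X]| => c1.
lia.
Qed.

Lemma B_grow s x k : B s x k \subset B s x k.+1.
Proof. by rewrite /B iterS /grow -!setUA subsetUl. Qed.

Lemma B_sub s x i j : i <= j -> B s x i \subset B s x j.
Proof.
move=> H; elim: j H => [|j IH]; first by rewrite leqn0 => /eqP ->.
rewrite leq_eqVlt => /orP[/eqP ->//|H]; apply: subset_trans (IH H) (B_grow _ _ _).
Qed.

Lemma B_walk s x p : path (E s) x p -> last x p \in B s x (size p).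
Proof.
elim/last_ind: p => [|p c IH]; first by rewrite /= /B /= set11.
rewrite rcons_path last_rcons size_rcons => /andP[Hp Hc].
have Hl := IH Hp; rewrite /B iterS -/(B s x (size p)) /grow !inE.
move: Hc; rewrite /E /M => /orP[/cyc_nb /orP[] /eqP ->|/andP[/eqP <- _]].
- by rewrite (imset_f _ Hl) !orbT.
- by rewrite (imset_f _ Hl) !orbT.
- by rewrite (imset_f _ Hl) !orbT.
Qed.

Lemma far_B s x u k : u \notin B s x k -> far (E s) x u k.+1.
Proof.
move=> Hu p Hp Hl; rewrite ltnNge; apply/negP => Hk.
have := B_walk Hp; rewrite Hl => H.
by move: Hu; rewrite (subsetP (B_sub s x Hk) _ H).
Qed.

Lemma B0 s x k : x \in B s x k.
Proof. by apply: (subsetP (B_sub s x (leq0n k))); rewrite /B /= set11. Qed.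

Lemma card_lt : #|[set w : 'I_n | w < m]| = m.
Proof.
have -> : [set w : 'I_n | w < m] = [set lshift m i | i : 'I_m].
  apply/setP => w; rewrite inE; apply/idP/imsetP => [Hw|[i _ ->]]; last by rewrite /= ltn_ord.
  by exists (Ordinal Hw) => //; apply: val_inj.
by rewrite card_imset ?card_ord //; exact: lshift_inj.
Qed.

Lemma card_half x : #|[set w | half x w]| = m.
Proof.
case Hx: (x < m).
  have -> : [set w | half x w] = [set w : 'I_n | w < m].
    by apply/setP => w; rewrite !inE /half Hx; case: (w < m).
  exact: card_lt.
have -> : [set w | half x w] = ~: [set w : 'I_n | w < m].
  by apply/setP => w; rewrite !inE /half Hx; case: (w < m).
have := cardsC [set w : 'I_n | w < m]; rewrite card_ord card_lt.
move: #|~: _| => c; lia.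
Qed.

Lemma fix_neq0 s : s o0 = og -> forall w, s w = w -> w != o0.
Proof.
move=> Ho w Hw; apply/eqP => Ew; subst w; move: o0_neq_og.
by rewrite -{1}Hw Ho eqxx.
Qed.

Lemma exists_y s x : involutive s -> (forall w, half w (s w)) -> s x = x ->
  exists y, [/\ s y = y, half x y & y != x].
Proof.
move=> Hs Hh Hx.
set H := [set w | half x w]; set Bm := [set w | s w != w].
have Ev : ~~ odd #|H :&: Bm|.
  apply: even_invol => [w|w|w]; rewrite !inE => /andP[H1 H2] //.
  rewrite (half_trans H1 (Hh w)) /=; rewrite Hs; by rewrite eq_sym.
have Hc := cardsID Bm H; rewrite card_half in Hc.
have Hxin : x \in H :\: Bm by rewrite !inE Hx eqxx /half eqxx.
have H1 := cardsD1 x (H :\: Bm); rewrite Hxin in H1.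
have Hne : #|H :\: Bm| != 1.
  apply/eqP => E1; move: Hmeven; rewrite -Hc E1 addn1 /= negbK.
  by rewrite (negbTE Ev).
have : 0 < #|(H :\: Bm) :\ x|.
  move: Hne H1; move: #|H :\: Bm| => a; move: #|(H :\: Bm) :\ x| => b; lia.
rewrite card_gt0 => /set0Pn [y]; rewrite !inE => /andP[Hyx /andP[/negPn /eqP Hy Hxy]].
by exists y.
Qed.

Lemma exists_u s x y : exists u, [/\ half x u, u \notin B s x g.-1, u \notin B s y g.-1,
  u != o0 & u != og].
Proof.
set X := B s x g.-1 :|: B s y g.-1 :|: [set o0; og].
have : ~~ ([set w | half x w] \subset X).
  apply/negP => /subset_leq_card; rewrite card_half.
  have h1 := card_U (B s x g.-1 :|: B s y g.-1) [set o0; og].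
  have h2 := card_U (B s x g.-1) (B s y g.-1).
  have h3 := B_card s x g.-1; have h4 := B_card s y g.-1.
  have h5 : #|[set o0; og]| <= 2 by rewrite cards2; case: (_ != _).
  rewrite /X; move: h1 h2 h3 h4 h5.
  move: #|B s x g.-1 :|: B s y g.-1 :|: [set o0; og]| => a.
  move: #|B s x g.-1 :|: B s y g.-1| => b.
  move: #|B s x g.-1| => c; move: #|B s y g.-1| => d; move: #|[set o0; og]| => e.
  move: Hm4; move: (4 ^ g.-1) => t; lia.
case/subsetPn => u Hu HuX; move: Hu HuX; rewrite /X !inE !negb_or => Hu /andP[/andP[H1 H2] /andP[H3 H4]].
by exists u.
Qed.

Lemma step s x : Inv s -> s x = x ->
  exists s', Inv s' /\ #|[set w | s' w == w]| < #|[set w | s w == w]|.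
Proof.
case=> Hinv HI2 Hh Ho HNS Hx.
have Hsym := E_sym Hinv.
have [y [Hy Hxy Hyx]] := exists_y Hinv Hh Hx.
have Hg1 : 1 < g.-1 by lia.
have Hx0 := fix_neq0 Ho Hx.
have Hy0 := fix_neq0 Ho Hy.
case: (classic (exists z, [/\ s z = z, half x z, z != x & far (E s) x z g.-1])).
  case=> z [Hz Hxz Hzx Fxz].
  have Hz0 := fix_neq0 Ho Hz.
  exists (mpair s x z); split.
    split.
    - exact: pair_inv.
    - move=> w; rewrite /mpair; case: (eqVneq w x) => [->|Hwx] /=.
        by move=> _; apply: contra (far_edge Hg1 Fxz); apply: cyc_E.
      case: (eqVneq w z) => [->|Hwz] /=.
        by move=> _; rewrite cyc_sym; apply: contra (far_edge Hg1 Fxz); apply: cyc_E.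
      exact: HI2.
    - move=> w; rewrite /mpair; case: (eqVneq w x) => [->|Hwx] //=.
      by case: (eqVneq w z) => [->|Hwz] //=; rewrite half_sym.
    - by rewrite /mpair eq_sym (negbTE Hx0) eq_sym (negbTE Hz0).
    - apply: NS_sub (@E_mpair s x z) _; exact: NS_add Hsym HNS Fxz (far_rev Hsym Fxz).
  apply: proper_card; apply/properP; split.
    apply/subsetP => w; rewrite !inE /mpair; case: (eqVneq w x) => [->|Hwx] /=.
      by rewrite Hx eqxx.
    by case: (eqVneq w z) => [->|Hwz] //=; rewrite Hz eqxx.
  by exists x; rewrite !inE ?Hx ?eqxx // /mpair eqxx.
move=> Hno.
have [u [Hxu Hux Huy Hu0 Hug]] := exists_u s x y.
have Fxu : far (E s) x u g.-1.+1 := far_B Hux.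
have Fyu : far (E s) y u g.-1.+1 := far_B Huy.
have Fxu' : far (E s) x u g.-1 := far_mono (leqnSn _) Fxu.
have Hxu' : x != u := far_neq (ltn0Sn _) Fxu.
have Hyu : y != u := far_neq (ltn0Sn _) Fyu.
have Hsu : s u != u.
  apply/negP => /eqP Hsu; apply: Hno; exists u; split => //; by rewrite eq_sym.
set v := s u.
have Evu : E s v u by rewrite /E /M /v Hinv eqxx Hsu orbT.
have Euv : E s u v by rewrite Hsym.
have Fxv := far_ext Evu Fxu. have Fyv := far_ext Evu Fyu.
have Hg0 : 0 < g.-1 := ltnW Hg1.
have Hxv : x != v := far_neq Hg0 Fxv.
have Hyv : y != v := far_neq Hg0 Fyv.
have Hcuv : ~~ cyc u v := HI2 u Hsu.
have Hv0 : v != o0.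
  apply/eqP => Ev; have : u = og by rewrite -Ho -Ev /v Hinv.
  by move/eqP; rewrite (negbTE Hug).
set s1 := unpair s u v.
have Hs1 : involutive s1 := unpair_inv Hinv (erefl v).
have Hs1x : s1 x = x by rewrite /s1 /unpair (negbTE Hxu') (negbTE Hxv) Hx.
have Hs1u : s1 u = u by rewrite /s1 /unpair eqxx.
set s2 := mpair s1 x u.
have Hs2 : involutive s2 := pair_inv Hs1 Hs1x Hs1u.
have Hs2y : s2 y = y.
  by rewrite /s2 /mpair (negbTE Hyx) (negbTE Hyu) /s1 /unpair (negbTE Hyu) (negbTE Hyv) Hy.
have Hs2v : s2 v = v.
  by rewrite /s2 /mpair eq_sym (negbTE Hxv) (negbTE Hsu) /s1 /unpair (negbTE Hsu) eqxx.
set s' := mpair s2 y v.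
have Hs' : involutive s' := pair_inv Hs2 Hs2y Hs2v.
have Hother w : w != x -> w != y -> w != u -> w != v -> s' w = s w.
  move=> H1 H2 H3 H4.
  by rewrite /s' /s2 /s1 /mpair /unpair (negbTE H1) (negbTE H2) (negbTE H3) (negbTE H4).
have Esx : s' x = u.
  by rewrite /s' /mpair eq_sym (negbTE Hyx) (negbTE Hxv) /s2 /mpair eqxx.
have Esu : s' u = x.
  by rewrite /s' /mpair eq_sym (negbTE Hyu) eq_sym (negbTE Hsu) /s2 /mpair eq_sym (negbTE Hxu') eqxx.
have Esy : s' y = v by rewrite /s' /mpair eqxx.
have Esv : s' v = y by rewrite /s' /mpair eq_sym (negbTE Hyv) eqxx.
have Nxu : ~~ cyc x u by apply: contra (far_edge Hg1 Fxu'); apply: cyc_E.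
have Nyv : ~~ cyc y v by apply: contra (far_edge Hg1 Fyv); apply: cyc_E.
exists s'; split.
  split.
  - exact: Hs'.
  - move=> w.
    case: (eqVneq w x) => [->|Hwx]; first by rewrite Esx.
    case: (eqVneq w u) => [->|Hwu]; first by rewrite Esu cyc_sym.
    case: (eqVneq w y) => [->|Hwy]; first by rewrite Esy.
    case: (eqVneq w v) => [->|Hwv]; first by rewrite Esv cyc_sym.
    rewrite Hother //; exact: HI2.
  - move=> w.
    have Hyv' : half y v.
      apply: half_trans (Hh u); apply: half_trans Hxu; by rewrite half_sym.
    case: (eqVneq w x) => [->|Hwx]; first by rewrite Esx.
    case: (eqVneq w u) => [->|Hwu]; first by rewrite Esu half_sym.
    case: (eqVneq w y) => [->|Hwy]; first by rewrite Esy.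
    case: (eqVneq w v) => [->|Hwv]; first by rewrite Esv half_sym.
    rewrite Hother //; exact: Hh.
  - by rewrite Hother // eq_sym.
  - have S : subrel (E s') (add (add (rem (E s) u v) x u) y v).
      move=> a b H.
      have := E_mpair H; apply: add_mono => c d H2.
      have := E_mpair H2; apply: add_mono => c' d' H3.
      exact: E_unpair Hinv (erefl v) Hcuv _ _ H3.
    apply: NS_sub S _; exact: NS_swap Hsym (@E_irr s) HNS Euv Fxu' Fyv Fxv.
apply: proper_card; apply/properP; split.
  apply/subsetP => w; rewrite !inE.
  case: (eqVneq w x) => [->|Hwx]; first by rewrite Esx eq_sym (negbTE Hxu').
  case: (eqVneq w u) => [->|Hwu]; first by rewrite Esu (negbTE Hxu').
  case: (eqVneq w y) => [->|Hwy]; first by rewrite Esy eq_sym (negbTE Hyv).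
  case: (eqVneq w v) => [->|Hwv]; first by rewrite Esv (negbTE Hyv).
  by rewrite Hother.
by exists x; rewrite !inE ?Hx ?eqxx // Esx eq_sym.
Qed.

Lemma perfect_exists : exists s, Inv s /\ forall x, s x != x.
Proof.
suff H : forall k s, Inv s -> #|[set w | s w == w]| <= k ->
    exists s', Inv s' /\ forall x, s' x != x.
  exact: H _ s0 Inv_s0 (leqnn _).
elim=> [|k IH] s Hs Hk.
  exists s; split => // x; apply/negP => Hx.
  have : x \in [set w | s w == w] by rewrite inE.
  by move: Hk; rewrite leqn0 => /eqP/cards0_eq ->; rewrite inE.
case: (boolP [exists x, s x == x]).
  case/existsP => x /eqP Hx; have [s' [Hs' Hlt]] := step Hs Hx.
  apply: IH Hs' _; move: Hlt Hk; move: #|[set w | s' w == w]| => a.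
  move: #|[set w | s w == w]| => b; lia.
move=> Hn; exists s; split => // x; apply/negP => Hx; move/existsP: Hn; apply; by exists x.
Qed.

Lemma cubic_E s : Inv s -> (forall x, s x != x) -> cubic (E s).
Proof.
move=> [Hinv HI2 _ _ _] Hp x.
have -> : [set y | E s x y] = [set ordS x; ord_pred x; s x].
  apply/setP => y; rewrite !inE /E /M; apply/idP/idP.
    case/orP => [H|/andP[/eqP -> _]]; last by rewrite eqxx orbT.
    by case/orP: (cyc_nb H) => /eqP ->; rewrite eqxx ?orbT.
  case/orP => [/orP[/eqP ->|/eqP ->]|/eqP ->].
  - by rewrite /cyc eqxx.
  - by rewrite /cyc ord_predK eqxx orbT.
  - by rewrite eqxx eq_sym Hp orbT.
have H1 := HI2 x (Hp x); move: H1; rewrite /cyc negb_or => /andP[H1 H2].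
have H3 : ord_pred x != s x.
  by apply: contra H2 => /eqP <-; rewrite ord_predK.
rewrite setUC cardsU1 cards2 !inE negb_or ordS_pred_neq H1 (eq_sym (s x) (ord_pred x)) H3.
by [].
Qed.

Lemma restr_path (X : {set 'I_n}) (r : rel 'I_n) (P0 : pred 'I_n) x p :
  (forall a b, r a b -> P0 a = P0 b) -> path r x p -> P0 (last x p) = P0 x.
Proof.
move=> H; elim: p x => [//|c p IH] x /= /andP[Hxc Hp].
by rewrite (IH c Hp) (H _ _ Hxc).
Qed.

Lemma fragile_E s : Inv s -> (forall x, s x != x) -> fragile (E s).
Proof.
move=> Hs Hp S f [Hfs Hsub] [H4 Hconn].
have Hfe : forall a b, f a b -> E s a b by move=> a b /Hsub /and3P[].
have HfS : forall a b, f a b -> a \in S by move=> a b /Hsub /and3P[].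
have Hcub := cubic_E Hs Hp.
have Hnb : forall x, x \in S -> forall y, E s x y -> (y \in S) && f x y.
  move=> x Hx y Hxy; apply/negPn/negP => Hbad.
  set X := [set z in S | f x z].
  have HXsub : X \subset S by apply/subsetP => z; rewrite inE => /andP[].
  have HXc : #|X| <= 2.
    have : X \subset [set z | E s x z] :\ y.
      apply/subsetP => z; rewrite !inE => /andP[Hz Hf]; rewrite (Hfe _ _ Hf) andbT.
      by apply/eqP => Ezy; subst z; rewrite Hz Hf in Hbad.
    move/subset_leq_card; have := cardsD1 y [set z | E s x z].
    rewrite Hcub inE Hxy; move: #|_ :\ y| => a; move: #|X| => b; lia.
  have Hcon := Hconn X HXsub HXc.
  have Hxx : x \in S :\: X by rewrite !inE Hx andbT; apply/negP => /andP[_ /Hfe]; rewrite E_irr.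
  have : ~~ (S \subset x |: X).
    apply/negP => /subset_leq_card; have := cardsU1 x X.
    move: H4 HXc; move: #|S| => a; move: #|X| => b; move: #|x |: X| => c.
    case: (x \notin X) => /=; lia.
  case/subsetPn => z HzS; rewrite !inE negb_or => /andP[Hzx HzX].
  have Hz : z \in S :\: X by rewrite !inE HzS andbT; move: HzX; rewrite HzS.
  case/connectP: (Hcon x z Hxx Hz) => [[|c p]] /=.
    by move=> _ Ezx; rewrite Ezx eqxx in Hzx.
  move=> /andP[Hxc _] _; move: Hxc; rewrite /restr /= => /and3P[_ Hc Hf].
  by move: Hc; rewrite !inE Hf andbT andNb.
have HS : forall w, w \in S.
  have : 0 < #|S| by move: H4; move: #|S| => a; lia.
  case/card_gt0P => x0 Hx0.
  have Hup : forall k, x0 + k < n -> forall w : 'I_n, nat_of_ord w = x0 + k -> w \in S.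
    elim=> [|k IH] Hk w Hw.
      by have -> : w = x0 by apply: val_inj; rewrite /= Hw addn0.
    have Hk' : x0 + k < n by lia.
    have Hw' := IH Hk' (Ordinal Hk') erefl.
    have : E s (Ordinal Hk') w.
      rewrite /E /cyc; apply/orP; left; apply/orP; left; rewrite eqS /=.
      case: ifP => /eqP ?; apply/eqP; lia.
    by move/(Hnb _ Hw')/andP=> [].
  have Hdown : forall k, k <= x0 -> forall w : 'I_n, nat_of_ord w = x0 - k -> w \in S.
    elim=> [|k IH] Hk w Hw.
      by have -> : w = x0 by apply: val_inj; rewrite /= Hw subn0.
    have Hk' : x0 - k < n by have := ltn_ord x0; lia.
    have Hw' := IH (ltnW Hk) (Ordinal Hk') erefl.
    have : E s (Ordinal Hk') w.
      rewrite /E /cyc; apply/orP; left; apply/orP; right; rewrite eqS /=.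
      have := ltn_ord w; case: ifP => /eqP ? ?; apply/eqP; lia.
    by move/(Hnb _ Hw')/andP=> [].
  move=> w; case: (leqP x0 w) => Hw.
    by apply: (Hup (w - x0)); [have := ltn_ord w; lia | lia].
  by apply: (Hdown (x0 - w)); lia.
have Hm1 : m.-1 < n by lia.
have Hm : m < n by lia.
set om1 : 'I_n := Ordinal Hm1. set om : 'I_n := Ordinal Hm.
set X := [set om1; ol].
have HXsub : X \subset S by apply/subsetP => w _; exact: HS.
have HXc : #|X| <= 2 by rewrite cards2; case: (_ != _).
have Hcon := Hconn X HXsub HXc.
have Ho0 : o0 \in S :\: X by rewrite !inE HS andbT -!val_eqE /= negb_or; apply/andP; split; apply/eqP; lia.
have Hom : om \in S :\: X by rewrite !inE HS andbT -!val_eqE /= negb_or; apply/andP; split; apply/eqP; lia.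
case/connectP: (Hcon o0 om Ho0 Hom) => p Hpath Hl.
have Hside : forall a b, restr (S :\: X) f a b -> (a < m) = (b < m).
  move=> a b; rewrite /restr /= !inE -!val_eqE /= => /and3P[/andP[Ha1 _] /andP[Hb1 _] Hf].
  move: Ha1 Hb1; rewrite !negb_or => /andP[Ha1 Ha2] /andP[Hb1 Hb2].
  have := Hfe _ _ Hf; rewrite /E /M => /orP[|/andP[/eqP Eb _]].
    rewrite /cyc !eqS; move: Ha1 Ha2 Hb1 Hb2; have := ltn_ord a; have := ltn_ord b.
    case: ifP => /eqP ?; case: ifP => /eqP ?; lia.
  case: Hs => _ _ Hh _ _; have := Hh a; rewrite Eb /half => /eqP.
  by [].
have := restr_path (P0 := fun w : 'I_n => w < m) X Hside Hpath.
rewrite -Hl /= ltnn.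
have -> : 0 < m by lia.
by [].
Qed.

Lemma not2deg s : Inv s -> (forall x, s x != x) -> ~ two_degenerate (E s).
Proof.
move=> Hs Hp H.
have Hsub : is_subgraph (E s) [set: 'I_n] (E s).
  split; first by case: Hs => Hinv _ _ _ _; exact: E_sym.
  by move=> a b Hab; rewrite !inE Hab.
have Hne : [set: 'I_n] != set0 by apply/set0Pn; exists o0; rewrite inE.
have [x _ Hx] := H _ _ Hsub Hne.
move: Hx; rewrite /deg_in.
have -> : [set y in [set: 'I_n] | E s x y] = [set y | E s x y] by apply/setP => y; rewrite !inE.
by rewrite (cubic_E Hs Hp).
Qed.

Lemma path_iota (r : rel nat) k i : (forall j, i <= j -> j < i + k -> r j j.+1) ->
  path r i (iota i.+1 k).
Proof.
elim: k i => [//|k IH] i H /=; rewrite H ?leqnn ?addnS ?ltnS ?leq_addr //=.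
apply: IH => j Hj1 Hj2; apply: H; lia.
Qed.

Lemma last_iota i k : last i (iota i.+1 k) = i + k.
Proof. by elim: k i => [|k IH] i /=; [rewrite addn0 | rewrite IH addnS]. Qed.

Lemma girth_E s : Inv s -> girth_eq (E s) g.
Proof.
case=> Hinv HI2 Hh Ho HNS; split.
  pose f (i : nat) : 'I_n := insubd o0 i.
  have fval i : i < n -> nat_of_ord (f i) = i by move=> Hi; rewrite /f val_insubd Hi.
  exists [seq f i | i <- iota 0 g]; split.
  - by rewrite size_map size_iota.
  - lia.
  - rewrite map_inj_in_uniq ?iota_uniq // => i j; rewrite !mem_iota => Hi Hj Eij.
    by rewrite -(fval i) ?Eij ?fval //; lia.
  - have Eg : g = g.-1.+1 by lia.
    rewrite Eg /= rcons_path.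
    have -> : [seq f i | i <- iota 1 g.-1] = map f (iota 1 g.-1) by [].
    rewrite path_map last_map last_iota add0n; apply/andP; split.
      apply: path_iota => j _ Hj; rewrite /relpre /=.
      rewrite /E /cyc; apply/orP; left; apply/orP; left; rewrite eqS.
      rewrite !fval; try lia; case: ifP => /eqP ?; apply/eqP; lia.
    have -> : f g.-1 = og by apply: val_inj; rewrite /= fval //; lia.
    have -> : f 0 = o0 by apply: val_inj; rewrite /= fval //; lia.
    have Hog : s og = o0 by rewrite -Ho Hinv.
    by rewrite /E /M Hog eqxx eq_sym o0_neq_og orbT.
move=> k Hk [[|u p] [Hsz H3 Hu Hc]]; first by move: Hsz H3 => <-.
move: Hc; rewrite /= rcons_path => /andP[Hp Hl].
have Hsym := E_sym Hinv.
have := HNS u p Hp Hu _; rewrite Hsym Hl; move: Hsz Hk H3 => /= <-.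
by move=> Hk H3 /(_ _ erefl) ? ; lia.
Qed.

Lemma final_graph : exists e : rel 'I_n,
  [/\ simple_graph e, fragile e, cubic e, girth_eq e g & ~ two_degenerate e].
Proof.
have [s [Hs Hp]] := perfect_exists.
exists (E s); split.
- split; [by case: Hs => Hinv _ _ _ _; exact: E_sym | exact: E_irr].
- exact: fragile_E.
- exact: cubic_E.
- exact: girth_E.
- exact: not2deg.
Qed.

End Graph.

Unset Implicit Arguments.

Theorem mainTheorem8 :
  forall g : nat, 3 <= g ->
    exists (n : nat) (e : rel 'I_n),
      [/\ simple_graph e, fragile e, cubic e, girth_eq e g
        & ~ two_degenerate e].
Proof.
move=> g Hg.
have Hg' : 2 < g := Hg.
have h2 := ltn_expl g (isT : 1 < 4).
have Hgm : g < 4 * 4 ^ g by move: h2; move: (4 ^ g) => t; lia.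
have Hme : ~~ odd (4 * 4 ^ g) by rewrite oddM.
have Hm4 : 2 * 4 ^ g.-1 + 2 < 4 * 4 ^ g.
  have h1 : 4 ^ g.-1 <= 4 ^ g by rewrite leq_exp2l //; exact: leq_pred.
  move: h1 h2; move: (4 ^ g.-1) (4 ^ g) => a b; lia.
have [e He] := final_graph Hg' Hgm Hme Hm4.
by exists (4 * 4 ^ g + 4 * 4 ^ g), e.
Qed.
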